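(* (i) Let $(\Phi_1,\Phi_2,\Phi_3,\Phi_{123})$ and $(\Phi_{23},\Phi_{13},\Phi_{12},\Phi)$ be the vertices of two reciprocal $(4,6)$ configurations, and let the complex dilations $a,b,c,a_1,b_2,c_3\in\mathbb{C}$ be defined by $$\Phi_{12}-\Phi=c(\Phi_1-\Phi_2),\quad \Phi_{23}-\Phi=a(\Phi_2-\Phi_3),\quad \Phi_{13}-\Phi=b(\Phi_3-\Phi_1),$$ $$\Phi_{123}-\Phi_3=c_3(\Phi_{13}-\Phi_{23}),\quad \Phi_{123}-\Phi_1=a_1(\Phi_{12}-\Phi_{13}),\quad \Phi_{123}-\Phi_2=b_2(\Phi_{23}-\Phi_{12}).$$ Then $a_1=-\frac{a}{ab+bc+ca}$, $b_2=-\frac{b}{ab+bc+ca}$, $c_3=-\frac{c}{ab+bc+ca}$. (ii) Conversely, let $\Phi_1,\Phi_2,\Phi_3,\Phi$ be four generic points of $\mathbb{C}$, let $a,b,c\in\mathbb{C}$ be arbitrary non-vanishing complex numbers and let $a_1,b_2,c_3$ be given by these formulas. Then the six linear equations above, in the unknowns $\Phi_{12},\Phi_{23},\Phi_{13},\Phi_{123}$, are compatible and their unique solution gives reciprocal $(4,6)$ configurations with vertices $\Phi_1,\Phi_2,\Phi_3,\Phi_{123}$ and $\Phi_{23},\Phi_{13},\Phi_{12},\Phi$ respectively.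
   Context: The plane is identified with $\mathbb{C}$. A $(4,6)$ configuration consists of four points, each pair joined by a circular arc (generalized circles allowed), such that the circular extensions of all six arcs pass through one common point $\Phi_*$ (possibly $\infty$). Arcs correspond as: $\{\Phi_1,\Phi_2\}\leftrightarrow\{\Phi,\Phi_{12}\}$, $\{\Phi_2,\Phi_3\}\leftrightarrow\{\Phi,\Phi_{23}\}$, $\{\Phi_3,\Phi_1\}\leftrightarrow\{\Phi,\Phi_{13}\}$, $\{\Phi_1,\Phi_{123}\}\leftrightarrow\{\Phi_{13},\Phi_{12}\}$, $\{\Phi_2,\Phi_{123}\}\leftrightarrow\{\Phi_{12},\Phi_{23}\}$, $\{\Phi_3,\Phi_{123}\}\leftrightarrow\{\Phi_{23},\Phi_{13}\}$. Two $(4,6)$ configurations (common points $\Phi_*$, $\Phi_*'$) are reciprocally related if the six angles made by the arcs of one equal those made by the corresponding arcs of the other; equivalently, if there are Möbius transformations sending $\Phi_*,\Phi_*'$ to $\infty$ such that the two resulting straight-line figures, after rotating one of them, have all corresponding segments parallel (i.e. form reciprocal triangles). *)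

(* Defs.v *)
(* The plane is C := R[i] = complex R over an arbitrary
   real closed field R (covers R = the reals, i.e. C = the complex numbers). *)
From HB Require Import structures.
From mathcomp Require Import all_boot all_order all_algebra.
From mathcomp Require Import complex.
From mathcomp Require Import mpoly.
Set Implicit Arguments.
Unset Strict Implicit.
Unset Printing Implicit Defensive.
Import Order.TTheory GRing.Theory Num.Theory.
Local Open Scope ring_scope.

(* Points of the Riemann sphere: [Some z] is a finite point, [None] is oo. *)
Definition sphere (R : rcfType) := option R[i].

Record mobius (R : rcfType) := Mobius {
  mob_a : R[i]; mob_b : R[i]; mob_c : R[i]; mob_d : R[i] }.

Definition mobius_ok (R : rcfType) (M : mobius R) :=
  mob_a M * mob_d M - mob_b M * mob_c M != 0.

Definition mob_app (R : rcfType) (M : mobius R) (z : sphere R) : sphere R :=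
  match z with
  | Some w => if mob_c M * w + mob_d M == 0 then None
              else Some ((mob_a M * w + mob_b M) / (mob_c M * w + mob_d M))
  | None => if mob_c M == 0 then None else Some (mob_a M / mob_c M)
  end.

(* finite image of a finite point (junk value 0 if it is sent to oo) *)
Definition mob_fin (R : rcfType) (M : mobius R) (z : R[i]) : R[i] :=
  odflt 0 (mob_app M (Some z)).

Definition parallel (R : rcfType) (x y : R[i]) : Prop :=
  complex.Im (x * conjc y) = 0.

(* A (4,6) configuration with vertices P1 P2 P3 P4 and common point Ps of the
   circular extensions of its six arcs.  For three distinct points of the
   sphere there is exactly one generalized circle through them, so the six
   circles through the pairs of vertices and Ps always exist; the
   configuration is determined (up to the choice of the arcs on these circles,
   which plays no role for the reciprocity relation below) by the vertices
   and Ps. *)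
Definition config46 (R : rcfType) (P1 P2 P3 P4 : R[i]) (Ps : sphere R) : Prop :=
  [/\ uniq [:: P1; P2; P3; P4],
      Ps != Some P1, Ps != Some P2 & (Ps != Some P3) && (Ps != Some P4)].

(* Reciprocally related (4,6) configurations (P1,P2,P3,P123) with common point
   Ps and (Q23,Q13,Q12,Q) with common point Qs: there are Moebius
   transformations M, M' sending Ps, Qs to oo such that, after a rotation u of
   the first straight-line figure, all corresponding segments are parallel:
   {P1,P2}<->{Q,Q12}, {P2,P3}<->{Q,Q23}, {P3,P1}<->{Q,Q13},
   {P1,P123}<->{Q13,Q12}, {P2,P123}<->{Q12,Q23}, {P3,P123}<->{Q23,Q13}. *)
Definition reciprocal (R : rcfType) (P1 P2 P3 P123 : R[i]) (Ps : sphere R)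
    (Q23 Q13 Q12 Q : R[i]) (Qs : sphere R) : Prop :=
  config46 P1 P2 P3 P123 Ps /\ config46 Q23 Q13 Q12 Q Qs /\
  exists (M M' : mobius R) (u : R[i]),
    [/\ mobius_ok M /\ mobius_ok M', mob_app M Ps = None, mob_app M' Qs = None,
        `|u| = 1 &
    (let f := mob_fin M in let g := mob_fin M' in
    [/\ parallel (u * (f P1 - f P2)) (g Q - g Q12),
        parallel (u * (f P2 - f P3)) (g Q - g Q23),
        parallel (u * (f P3 - f P1)) (g Q - g Q13) /\
        parallel (u * (f P1 - f P123)) (g Q13 - g Q12),
        parallel (u * (f P2 - f P123)) (g Q12 - g Q23) &
        parallel (u * (f P3 - f P123)) (g Q23 - g Q13)])].

Definition sqn (R : rcfType) (z : R[i]) : R := complex.Re z ^+ 2 + complex.Im z ^+ 2.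

(* The point z of the sphere lies on the generalized circle
   A |w|^2 + 2 Re (conj B * w) + D = 0 (A, D real, |B|^2 > A D);
   oo lies on it iff A = 0 (i.e. it is a straight line). *)
Definition on_gcircle (R : rcfType) (A : R) (B : R[i]) (D : R) (z : sphere R) : Prop :=
  match z with
  | Some w => A * sqn w + 2 * complex.Re (conjc B * w) + D = 0
  | None => A = 0
  end.

Definition gcircle_ok (R : rcfType) (A : R) (B : R[i]) (D : R) : Prop :=
  A * D < sqn B.

Definition concyclic (R : rcfType) (s : seq (sphere R)) : Prop :=
  exists A B D, gcircle_ok A B D /\ forall z, z \in s -> on_gcircle A B D z.

Definition coords4 (R : rcfType) (z1 z2 z3 z4 : R[i]) : 'I_8 -> R :=
  fun i => nth 0 [:: complex.Re z1; complex.Im z1; complex.Re z2; complex.Im z2;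
                     complex.Re z3; complex.Im z3; complex.Re z4; complex.Im z4] i.

(* Main.v *)
Require Import Defs.
From HB Require Import structures.
From mathcomp Require Import all_boot all_order all_algebra.
From mathcomp Require Import complex.
From mathcomp Require Import mpoly.
From mathcomp Require Import ring lra.
Import Order.TTheory GRing.Theory Num.Theory.
Local Open Scope ring_scope.
Local Open Scope complex_scope.

Section Aux.
Variable R : rcfType.
Implicit Types x y z w : R[i].

Lemma ceqP x y : complex.Re x = complex.Re y -> complex.Im x = complex.Im y -> x = y.
Proof. by case: x => a b; case: y => c d /= -> ->. Qed.

Ltac cdes := repeat match goal with | z : complex _ |- _ => destruct z end.
Ltac cring := cdes; apply: ceqP; rewrite /=; ring.

Lemma sqn_ge0 z : 0 <= sqn z.
Proof. by rewrite /sqn addr_ge0 ?sqr_ge0. Qed.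

Lemma sqn_eq0 z : sqn z = 0 -> z = 0.
Proof.
case: z => a b; rewrite /sqn /= => /eqP; rewrite paddr_eq0 ?sqr_ge0 //.
by rewrite !sqrf_eq0 => /andP[/eqP -> /eqP ->].
Qed.

Lemma sqn_gt0 z : z != 0 -> 0 < sqn z.
Proof.
move=> nz; rewrite lt_def sqn_ge0 andbT; apply/eqP => /sqn_eq0 h.
by rewrite h eqxx in nz.
Qed.

Lemma sqnE z : z * conjc z = (sqn z)%:C.
Proof. cdes; apply: ceqP; rewrite /sqn /=; ring. Qed.

Lemma Im_real (r : R) : complex.Im (r%:C) = 0.
Proof. by []. Qed.

Lemma par_real x (r : R) : parallel x (r%:C * x).
Proof. rewrite /parallel; cdes; rewrite /=; ring. Qed.

Lemma par_t w y : w != 0 -> parallel w y ->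
  y = (complex.Re (y * conjc w) / sqn w)%:C * w.
Proof.
move=> nw; have n1 : sqn w != 0 by rewrite gt_eqF // sqn_gt0.
move: n1; rewrite /parallel /sqn; clear nw; case: w => a b; case: y => c d /= n1 h.
apply: ceqP => /=; apply/eqP; rewrite -subr_eq0; apply/eqP.
  match goal with |- ?L = 0 => have -> : L = b * (a * - d + b * c) / (a ^+ 2 + b ^+ 2) by field end.
  by rewrite h mulr0 mul0r.
match goal with |- ?L = 0 => have -> : L = - a * (a * - d + b * c) / (a ^+ 2 + b ^+ 2) by field end.
by rewrite h mulr0 mul0r.
Qed.


Definition mdet (M : mobius R) := mob_a M * mob_d M - mob_b M * mob_c M.
Definition mden (M : mobius R) z := mob_c M * z + mob_d M.

Lemma mob_finE (M : mobius R) z : mden M z != 0 ->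
  mob_fin M z = (mob_a M * z + mob_b M) / mden M z.
Proof. by rewrite /mob_fin /mob_app /mden => /negbTE ->. Qed.

Lemma mob_pole (M : mobius R) Ps z : mobius_ok M -> mob_app M Ps = None ->
  Ps != Some z -> mden M z != 0.
Proof.
rewrite /mobius_ok /mden => ok; case: Ps => [w|] /=.
  case: eqP => // hw _ nwz; apply/eqP => hz.
  have hc : mob_c M * (w - z) = (mob_c M * w + mob_d M) - (mob_c M * z + mob_d M) by ring.
  rewrite hw hz subrr in hc.
  move/eqP: hc; rewrite mulf_eq0 => /orP[/eqP c0|].
    move: hw ok; rewrite c0 mul0r add0r => ->; by rewrite !mulr0 subrr eqxx.
  by rewrite subr_eq0 => /eqP wz; rewrite wz eqxx in nwz.
case: eqP => // c0 _ _; rewrite c0 mul0r add0r; apply/eqP => d0.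
by move: ok; rewrite c0 d0 !mulr0 subrr eqxx.
Qed.

Lemma mob_diff (M : mobius R) x y : mden M x != 0 -> mden M y != 0 ->
  mob_fin M x - mob_fin M y = mdet M * (x - y) / (mden M x * mden M y).
Proof.
move=> hx hy; rewrite !mob_finE //; move: hx hy; rewrite /mden /mdet => hx hy.
by field; rewrite hx hy.
Qed.

Lemma mob_neq (M : mobius R) x y : mobius_ok M -> mden M x != 0 -> mden M y != 0 ->
  x != y -> mob_fin M x != mob_fin M y.
Proof.
move=> ok hx hy nxy; rewrite -subr_eq0 mob_diff //.
have ok' : mdet M != 0 by [].
rewrite mulf_neq0 //.
  by rewrite mulf_neq0 // subr_eq0.
by rewrite invr_neq0 // !mulf_neq0.
Qed.

Definition EE (P1 P2 P3 P4 Q23 Q13 Q12 Q : R[i]) :=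
  (P2 - P3) * (P4 - P1) * ((Q13 - Q) * (Q12 - Q23)) -
  (P3 - P1) * (P4 - P2) * ((Q13 - Q12) * (Q23 - Q)).

Lemma mob_pair (M : mobius R) x1 x2 x3 x4 :
  mden M x1 != 0 -> mden M x2 != 0 -> mden M x3 != 0 -> mden M x4 != 0 ->
  (mob_fin M x1 - mob_fin M x2) * (mob_fin M x3 - mob_fin M x4) =
  mdet M ^+ 2 / (mden M x1 * mden M x2 * mden M x3 * mden M x4) * ((x1 - x2) * (x3 - x4)).
Proof.
move=> h1 h2 h3 h4; rewrite !mob_diff //.
by field; rewrite ?h1 ?h2 ?h3 ?h4.
Qed.

Lemma EE_mob (M M' : mobius R) P1 P2 P3 P4 Q23 Q13 Q12 Q :
  mden M P1 != 0 -> mden M P2 != 0 -> mden M P3 != 0 -> mden M P4 != 0 ->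
  mden M' Q23 != 0 -> mden M' Q13 != 0 -> mden M' Q12 != 0 -> mden M' Q != 0 ->
  exists k : R[i], k != 0 /\
  EE (mob_fin M P1) (mob_fin M P2) (mob_fin M P3) (mob_fin M P4)
     (mob_fin M' Q23) (mob_fin M' Q13) (mob_fin M' Q12) (mob_fin M' Q) =
  k * mdet M ^+ 2 * mdet M' ^+ 2 * EE P1 P2 P3 P4 Q23 Q13 Q12 Q.
Proof.
move=> h1 h2 h3 h4 g1 g2 g3 g4.
exists ((mden M P1 * mden M P2 * mden M P3 * mden M P4)^-1 *
        (mden M' Q23 * mden M' Q13 * mden M' Q12 * mden M' Q)^-1).
split; first by rewrite mulf_neq0 // invr_neq0 // !mulf_neq0.
rewrite /EE.
rewrite (mob_pair _ _ _ _ _ h2 h3 h4 h1) (mob_pair _ _ _ _ _ h3 h1 h4 h2).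
rewrite (mob_pair _ _ _ _ _ g2 g4 g3 g1) (mob_pair _ _ _ _ _ g2 g3 g1 g4).
by field; rewrite ?h1 ?h2 ?h3 ?h4 ?g1 ?g2 ?g3 ?g4.
Qed.

Lemma stepA P1 P2 P3 P123 Q23 Q13 Q12 Q a b c a1 b2 c3 :
  P1 != P2 -> P2 != P3 -> P3 != P1 -> Q23 != Q -> Q13 != Q23 -> Q12 != Q13 -> Q12 != Q23 ->
  Q12 - Q = c * (P1 - P2) -> Q23 - Q = a * (P2 - P3) -> Q13 - Q = b * (P3 - P1) ->
  P123 - P3 = c3 * (Q13 - Q23) -> P123 - P1 = a1 * (Q12 - Q13) ->
  P123 - P2 = b2 * (Q23 - Q12) ->
  EE P1 P2 P3 P123 Q23 Q13 Q12 Q = 0 ->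
  [/\ a1 = - (a / (a * b + b * c + c * a)),
      b2 = - (b / (a * b + b * c + c * a)) &
      c3 = - (c / (a * b + b * c + c * a))].
Proof.
move=> n12 n23 n31 nQ23 nQ1323 nQ1213 nQ1223 hQ12 hQ23 hQ13 hP3 hP1 hP2 hE.
have hab : a1 * b = b2 * a.
  have : EE P1 P2 P3 P123 Q23 Q13 Q12 Q =
    (P2 - P3) * (P3 - P1) * (Q12 - Q13) * (Q12 - Q23) * (a1 * b - b2 * a).
    by rewrite /EE hP1 hP2 hQ13 hQ23; ring.
  have nz : (P2 - P3) * (P3 - P1) * (Q12 - Q13) * (Q12 - Q23) != 0.
    by rewrite !mulf_neq0 // subr_eq0.
  rewrite hE => /esym/eqP; rewrite mulf_eq0 (negbTE nz) /= subr_eq0 => /eqP //.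
have a0 : a != 0.
  by apply: contraNneq nQ23 => a0; rewrite -subr_eq0 hQ23 a0 mul0r.
have eQ12 : Q12 = c * (P1 - P2) + Q by rewrite -hQ12; ring.
have eQ23 : Q23 = a * (P2 - P3) + Q by rewrite -hQ23; ring.
have eQ13 : Q13 = b * (P3 - P1) + Q by rewrite -hQ13; ring.
have eP : P123 = a1 * (Q12 - Q13) + P1 by rewrite -hP1; ring.
subst Q12 Q23 Q13 P123.
have eb2 : b2 = a1 * b / a by rewrite hab mulfK.
subst b2.
have h1 : (P1 - P2) * (a1 * (a * b + b * c + c * a) + a) = 0.
  have -> : (P1 - P2) * (a1 * (a * b + b * c + c * a) + a) =
    a * ((a1 * (c * (P1 - P2) + Q - (b * (P3 - P1) + Q)) + P1 - P2) -
    a1 * b / a * (a * (P2 - P3) + Q - (c * (P1 - P2) + Q))) by field.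
  by rewrite hP2 subrr mulr0.
move/eqP: h1; rewrite mulf_eq0 subr_eq0 (negbTE n12) /= addr_eq0 => /eqP h1.
have S0 : a * b + b * c + c * a != 0.
  by apply: contraNneq a0 => S0; move: h1; rewrite S0 mulr0 => /esym/eqP; rewrite oppr_eq0.
have ea1 : a1 = - (a / (a * b + b * c + c * a)) by rewrite -mulNr -h1 mulfK.
split.
- by [].
- by rewrite ea1; field; rewrite S0 a0.
have nQ : (b * (P3 - P1) + Q - (a * (P2 - P3) + Q)) != 0 by rewrite subr_eq0.
apply: (mulIf nQ); rewrite -hP3 ea1.
by field; rewrite S0.
Qed.

Lemma rCD (x y : R) : (x + y)%:C = x%:C + y%:C :> R[i].
Proof. by apply: ceqP; rewrite /= ?addr0. Qed.
Lemma rCB (x y : R) : (x - y)%:C = x%:C - y%:C :> R[i].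
Proof. by apply: ceqP; rewrite /= ?subr0. Qed.
Lemma rCN (x : R) : (- x)%:C = - x%:C :> R[i].
Proof. by apply: ceqP; rewrite /= ?oppr0. Qed.
Lemma rCM (x y : R) : (x * y)%:C = x%:C * y%:C :> R[i].
Proof. by apply: ceqP; rewrite /= ?mulr0 ?mul0r ?subr0 ?addr0. Qed.
Lemma rC0 (x : R) : (x%:C == 0 :> R[i]) = (x == 0).
Proof. by apply/eqP/eqP => [[]|->]. Qed.

Lemma indep (x y : R[i]) (l m : R) : l%:C * x + m%:C * y = 0 ->
  complex.Im (x * conjc y) != 0 -> l = 0 /\ m = 0.
Proof.
case: x => a b; case: y => c d [] /=; rewrite !mul0r !subr0 !addr0 => h1 h2 nz.
have hl : l * (b * c - a * d) = 0.
  have -> : l * (b * c - a * d) = (l * b + m * d) * c - (l * a + m * c) * d by ring.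
  by rewrite h1 h2; ring.
have hm : m * (b * c - a * d) = 0.
  have -> : m * (b * c - a * d) = (l * a + m * c) * b - (l * b + m * d) * a by ring.
  by rewrite h1 h2; ring.
have nz' : b * c - a * d != 0.
  by move: nz; congr (_ != _); ring.
move: hl hm.
move=> /eqP; rewrite mulf_eq0 (negbTE nz') orbF => /eqP -> /eqP; rewrite mulf_eq0 (negbTE nz') orbF => /eqP ->; by split.
Qed.

Lemma Im_lin (x y : R[i]) (l m : R) :
  complex.Im ((l%:C * x + m%:C * y) * conjc x) = m * complex.Im (y * conjc x).
Proof. case: x => a b; case: y => c d /=; ring. Qed.

Lemma Im_swap (x y : R[i]) : complex.Im (y * conjc x) = - complex.Im (x * conjc y).
Proof. case: x => a b; case: y => c d /=; ring. Qed.

Lemma Im_self (x : R[i]) : complex.Im (x * conjc x) = 0.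
Proof. case: x => a b /=; ring. Qed.

Lemma Im_rmul (r : R) (w : R[i]) : complex.Im (r%:C * w) = r * complex.Im w.
Proof. case: w => a b /=; ring. Qed.

Lemma par_ex (w y : R[i]) : w != 0 -> parallel w y -> exists t : R, y = t%:C * w.
Proof. by move=> nw hp; eexists; apply: par_t. Qed.

Lemma stepB (p1 p2 p3 p4 q23 q13 q12 q u : R[i]) :
  u != 0 -> p1 != p2 -> p2 != p3 -> p3 != p1 -> p1 != p4 -> p2 != p4 -> q13 != q12 ->
  parallel (u * (p1 - p2)) (q - q12) -> parallel (u * (p2 - p3)) (q - q23) ->
  parallel (u * (p3 - p1)) (q - q13) ->
  parallel (u * (p1 - p4)) (q13 - q12) -> parallel (u * (p2 - p4)) (q12 - q23) ->
  (complex.Im ((p1 - p3) * conjc (p2 - p3)) != 0 -> EE p1 p2 p3 p4 q23 q13 q12 q = 0) /\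
  (complex.Im ((p1 - p3) * conjc (p2 - p3)) = 0 ->
     complex.Im ((p4 - p3) * conjc (p1 - p3)) = 0).
Proof.
move=> u0 n12 n23 n31 n14 n24 nq hp1 hp2 hp3 hp4 hp5.
have nzd : forall x y : R[i], x != y -> u * (x - y) != 0.
  by move=> x y nxy; rewrite mulf_neq0 // subr_eq0.
have [t3 e1] := par_ex _ _ (nzd _ _ n12) hp1.
have [t1 e2] := par_ex _ _ (nzd _ _ n23) hp2.
have [t2 e3] := par_ex _ _ (nzd _ _ n31) hp3.
have [s1 e4] := par_ex _ _ (nzd _ _ n14) hp4.
have [s2 e5] := par_ex _ _ (nzd _ _ n24) hp5.
have eq12 : q12 = q - t3%:C * (u * (p1 - p2)) by rewrite -e1; ring.
have eq23 : q23 = q - t1%:C * (u * (p2 - p3)) by rewrite -e2; ring.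
have eq13 : q13 = q - t2%:C * (u * (p3 - p1)) by rewrite -e3; ring.
subst q12 q23 q13.
set T1 := t1%:C; set T2 := t2%:C; set T3 := t3%:C; set S1 := s1%:C; set S2 := s2%:C.
have C1 : T3 * (p1 - p2) - T2 * (p3 - p1) = S1 * (p1 - p4).
  apply: (mulfI u0); transitivity (S1 * (u * (p1 - p4))); last by ring.
  by rewrite -e4; ring.
have C2 : T1 * (p2 - p3) - T3 * (p1 - p2) = S2 * (p2 - p4).
  apply: (mulfI u0); transitivity (S2 * (u * (p2 - p4))); last by ring.
  by rewrite -e5; ring.
split.
  move=> nz.
  have L0 : (s2 * t3 + s2 * t2 + s1 * t3 - s1 * s2)%:C * (p1 - p3) +
            (- (s2 * t3) - s1 * t1 - s1 * t3 + s1 * s2)%:C * (p2 - p3) = 0.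
    rewrite !(rCD, rCB, rCN, rCM) -/T1 -/T2 -/T3 -/S1 -/S2.
    transitivity (S2 * (T3 * (p1 - p2) - T2 * (p3 - p1)) -
                  S1 * (T1 * (p2 - p3) - T3 * (p1 - p2)) - S1 * S2 * (p1 - p2)).
      by ring.
    by rewrite C1 C2; ring.
  have [l0 m0] := indep _ _ _ _ L0 nz.
  have key : s2 * t2 = s1 * t1.
    apply/eqP; rewrite -subr_eq0; apply/eqP; rewrite -[RHS](addr0 0) -{1}l0 -m0; ring.
  have kC : S2 * T2 = S1 * T1 by rewrite /S1 /S2 /T1 /T2 -!rCM key.
  transitivity (u ^+ 2 * (p2 - p3) * (p3 - p1) *
     (- T2 * (p4 - p1) * (T1 * (p2 - p3) - T3 * (p1 - p2)) +
      T1 * (p4 - p2) * (T3 * (p1 - p2) - T2 * (p3 - p1)))).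
    by rewrite /EE; ring.
  rewrite C1 C2.
  transitivity (u ^+ 2 * (p2 - p3) * (p3 - p1) * (p4 - p1) * (p4 - p2) * (S2 * T2 - S1 * T1)).
    by ring.
  by rewrite kC subrr mulr0.
move=> col.
have s10 : s1 != 0.
  apply: contra nq => /eqP S10; apply/eqP.
  have h0 : T3 * (p1 - p2) - T2 * (p3 - p1) = 0 by rewrite C1 /S1 S10 mul0r.
  apply/eqP; rewrite -subr_eq0; apply/eqP.
  transitivity (u * (T3 * (p1 - p2) - T2 * (p3 - p1))); first by ring.
  by rewrite h0 mulr0.
have e : S1 * (p4 - p3) = (s1 - t3 - t2)%:C * (p1 - p3) + t3%:C * (p2 - p3).
  transitivity (S1 * (p1 - p3) - S1 * (p1 - p4)); first by ring.
  by rewrite -C1 !rCB; ring.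
have : s1 * complex.Im ((p4 - p3) * conjc (p1 - p3)) = 0.
  rewrite -Im_rmul mulrA e Im_lin Im_swap col; ring.
by move/eqP; rewrite mulf_eq0 (negbTE s10) /= => /eqP.
Qed.


Definition gA (K g : R[i]) : R := 2 * complex.Im (K * conjc g).
Definition gD (L h : R[i]) : R := 2 * complex.Im (L * conjc h).
Definition gB (K L g h : R[i]) : R[i] := Complex 0 1 * (conjc (K * conjc h) - L * conjc g).

Lemma conjc0' : conjc (0 : R[i]) = 0.
Proof. by apply: ceqP; rewrite /= ?oppr0. Qed.

Lemma gform (K L g h z : R[i]) :
  2 * complex.Im ((K * z + L) * conjc (g * z + h)) =
  gA K g * sqn z + 2 * complex.Re (conjc (gB K L g h) * z) + gD L h.
Proof. rewrite /gA /gB /gD /sqn; cdes; rewrite /=; ring. Qed.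

Lemma gdet (K L g h : R[i]) : sqn (gB K L g h) - gA K g * gD L h = sqn (K * h - L * g).
Proof. rewrite /gA /gB /gD /sqn; cdes; rewrite /=; ring. Qed.

Lemma Im_mulr_real (v : R[i]) (r : R) : complex.Im (v * r%:C) = complex.Im v * r.
Proof. case: v => a b /=; ring. Qed.

Lemma in5 (T : eqType) (P : T -> Prop) (x1 x2 x3 x4 x5 : T) :
  P x1 -> P x2 -> P x3 -> P x4 -> P x5 -> forall t : T, t \in [:: x1; x2; x3; x4; x5] -> P t.
Proof.
move=> h1 h2 h3 h4 h5 t; rewrite !inE.
by case/orP=> [/eqP->|]; [|case/orP=> [/eqP->|]; [|case/orP=> [/eqP->|];
  [|case/orP=> [/eqP->|/eqP->]]]].
Qed.

Lemma line_conc (M : mobius R) Ps z1 z2 z3 z4 p0 d : mobius_ok M -> mob_app M Ps = None ->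
  d != 0 -> Ps != Some z1 -> Ps != Some z2 -> Ps != Some z3 -> Ps != Some z4 ->
  complex.Im ((mob_fin M z1 - p0) * conjc d) = 0 ->
  complex.Im ((mob_fin M z2 - p0) * conjc d) = 0 ->
  complex.Im ((mob_fin M z3 - p0) * conjc d) = 0 ->
  complex.Im ((mob_fin M z4 - p0) * conjc d) = 0 ->
  concyclic [:: Some z1; Some z2; Some z3; Some z4; Ps].
Proof.
move=> ok hPs d0 n1 n2 n3 n4 h1 h2 h3 h4.
set K := conjc d * (mob_a M - p0 * mob_c M).
set L := conjc d * (mob_b M - p0 * mob_d M).
exists (gA K (mob_c M)), (gB K L (mob_c M) (mob_d M)), (gD L (mob_d M)); split.
  rewrite /gcircle_ok -subr_gt0 gdet sqn_gt0 //.
  have -> : K * mob_d M - L * mob_c M = conjc d * mdet M by rewrite /K /L /mdet; ring.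
  apply: mulf_neq0; last exact: ok.
  apply: contra d0 => /eqP h; apply/eqP; rewrite -[d]conjcK h.
  by apply: ceqP; rewrite /= ?oppr0.
have pt : forall z, mden M z != 0 -> complex.Im ((mob_fin M z - p0) * conjc d) = 0 ->
    on_gcircle (gA K (mob_c M)) (gB K L (mob_c M) (mob_d M)) (gD L (mob_d M)) (Some z).
  move=> z nz hz; rewrite /on_gcircle -gform.
  have -> : (K * z + L) * conjc (mob_c M * z + mob_d M) =
     ((mob_fin M z - p0) * conjc d) * (mden M z * conjc (mden M z)).
    rewrite mob_finE // /K /L; move: nz; rewrite /mden => nz; field.
    by rewrite nz.
  by rewrite sqnE Im_mulr_real hz mul0r mulr0.
apply: (in5 _ (on_gcircle (gA K (mob_c M)) (gB K L (mob_c M) (mob_d M)) (gD L (mob_d M)))).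
- exact: pt _ (mob_pole _ _ _ ok hPs n1) h1.
- exact: pt _ (mob_pole _ _ _ ok hPs n2) h2.
- exact: pt _ (mob_pole _ _ _ ok hPs n3) h3.
- exact: pt _ (mob_pole _ _ _ ok hPs n4) h4.
move: hPs; case: Ps {n1 n2 n3 n4} => [w|] /=.
  case: eqP => // hw _; rewrite /on_gcircle -gform hw.
  by rewrite conjc0' mulr0 /= mulr0.
case: eqP => // c0 _; rewrite /on_gcircle /gA c0.
by rewrite conjc0' mulr0 /= mulr0.
Qed.

Lemma uniq4 (T : eqType) (x1 x2 x3 x4 : T) : uniq [:: x1; x2; x3; x4] ->
  [/\ x1 != x2, x1 != x3, x1 != x4, x2 != x3 & (x2 != x4) && (x3 != x4)].
Proof.
rewrite /= !inE !negb_or !andbT.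
by case/and3P=> /and3P[-> -> ->] /andP[-> ->] ->.
Qed.

Lemma part1 :
  (forall (P1 P2 P3 P123 Q23 Q13 Q12 Q : R[i]) (Ps Qs : sphere R),
     reciprocal P1 P2 P3 P123 Ps Q23 Q13 Q12 Q Qs ->
     ~ concyclic [:: Some P1; Some P2; Some P3; Some P123; Ps] ->
     forall a b c a1 b2 c3 : R[i],
       Q12 - Q = c * (P1 - P2) ->
       Q23 - Q = a * (P2 - P3) ->
       Q13 - Q = b * (P3 - P1) ->
       P123 - P3 = c3 * (Q13 - Q23) ->
       P123 - P1 = a1 * (Q12 - Q13) ->
       P123 - P2 = b2 * (Q23 - Q12) ->
       [/\ a1 = - (a / (a * b + b * c + c * a)),
           b2 = - (b / (a * b + b * c + c * a)) &
           c3 = - (c / (a * b + b * c + c * a))]).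
Proof.
move=> P1 P2 P3 P123 Q23 Q13 Q12 Q Ps Qs [cP [cQ [M [M' [u [[okM okM'] hM hM' hu hpar]]]]]].
move=> nconc a b c a1 b2 c3 hQ12 hQ23 hQ13 hP3 hP1 hP2.
case: cP => /uniq4[n12 n13 n14 n23 /andP[n24 n34]] s1 s2 /andP[s3 s4].
case: cQ => /uniq4[m1 m2 m3 m4 /andP[m5 m6]] r1 r2 /andP[r3 r4].
have d1 := mob_pole _ _ _ okM hM s1.
have d2 := mob_pole _ _ _ okM hM s2.
have d3 := mob_pole _ _ _ okM hM s3.
have d4 := mob_pole _ _ _ okM hM s4.
have e1 := mob_pole _ _ _ okM' hM' r1.
have e2 := mob_pole _ _ _ okM' hM' r2.
have e3 := mob_pole _ _ _ okM' hM' r3.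
have e4 := mob_pole _ _ _ okM' hM' r4.
case: hpar => /= hp1 hp2 [hp3 hp4] hp5 hp6.
have u0 : u != 0.
  by apply/eqP => u0; move: hu; rewrite u0 normr0 => /esym/eqP; rewrite oner_eq0.
have i12 := mob_neq _ _ _ okM d1 d2 n12.
have i23 := mob_neq _ _ _ okM d2 d3 n23.
have nd : forall x y : R[i], x != y -> y != x by move=> x y; rewrite eq_sym.
have i31 := mob_neq _ _ _ okM d3 d1 (nd _ _ n13).
have i14 := mob_neq _ _ _ okM d1 d4 n14.
have i24 := mob_neq _ _ _ okM d2 d4 n24.
have j := mob_neq _ _ _ okM' e2 e3 m4.
have [stB stC] := stepB _ _ _ _ _ _ _ _ _ u0 i12 i23 i31 i14 i24 j hp1 hp2 hp3 hp4 hp5.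
apply: (stepA _ _ _ _ _ _ _ _ _ _ _ _ _ _ n12 n23 (nd _ _ n13) m3 (nd _ _ m1) (nd _ _ m4)
  (nd _ _ m2) hQ12 hQ23 hQ13 hP3 hP1 hP2).
have [col|ncol] := eqVneq (complex.Im ((mob_fin M P1 - mob_fin M P3) *
                                        conjc (mob_fin M P2 - mob_fin M P3))) 0.
  exfalso; apply: nconc.
  apply: (line_conc _ _ _ _ _ _ (mob_fin M P3) (mob_fin M P1 - mob_fin M P3) okM hM) => //.
  - by rewrite subr_eq0 nd.
  - exact: Im_self.
  - by rewrite Im_swap col oppr0.
  - by rewrite subrr mul0r.
  - exact: stC.
have hE := stB ncol.
have [k [k0 hk]] := EE_mob M M' P1 P2 P3 P123 Q23 Q13 Q12 Q d1 d2 d3 d4 e1 e2 e3 e4.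
have okM0 : mdet M != 0 by [].
have okM0' : mdet M' != 0 by [].
move: hE; rewrite hk => /eqP; rewrite !mulf_eq0 (negbTE k0).
by rewrite (negbTE okM0) (negbTE okM0') /= => /eqP.
Qed.

End Aux.


Section Poly.
Variable R : rcfType.
Local Notation MP := {mpoly R[8]}.
Definition cp := (MP * MP)%type.
Definition cadd (x y : cp) : cp := (x.1 + y.1, x.2 + y.2).
Definition csub (x y : cp) : cp := (x.1 - y.1, x.2 - y.2).
Definition cscal (k : R[i]) (x : cp) : cp :=
  ((complex.Re k)%:MP * x.1 - (complex.Im k)%:MP * x.2,
   (complex.Re k)%:MP * x.2 + (complex.Im k)%:MP * x.1).
Definition carea (x y : cp) : MP := x.2 * y.1 - x.1 * y.2.
Definition cev (x : cp) (v : 'I_8 -> R) : R[i] := Complex (x.1).@[v] (x.2).@[v].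

Lemma cev_add x y v : cev (cadd x y) v = cev x v + cev y v.
Proof. by rewrite /cev /= !mevalD. Qed.
Lemma cev_sub x y v : cev (csub x y) v = cev x v - cev y v.
Proof. by rewrite /cev /= !mevalB. Qed.
Lemma cev_scal k x v : cev (cscal k x) v = k * cev x v.
Proof.
rewrite /cev /= !(mevalB, mevalD, mevalM, mevalC).
by case: k => a b; apply: ceqP => /=; ring.
Qed.
Lemma carea_ev x y v : (carea x y).@[v] = complex.Im (cev x v * conjc (cev y v)).
Proof. rewrite /carea /cev !(mevalB, mevalM) /=; ring. Qed.

Definition o8 {n : nat} (h : (n < 8)%N) : 'I_8 := Ordinal h.
Definition V1 : cp := ('X_(o8 (isT : (0 < 8)%N)), 'X_(o8 (isT : (1 < 8)%N))).
Definition V2 : cp := ('X_(o8 (isT : (2 < 8)%N)), 'X_(o8 (isT : (3 < 8)%N))).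
Definition V3 : cp := ('X_(o8 (isT : (4 < 8)%N)), 'X_(o8 (isT : (5 < 8)%N))).

Lemma cev_V (z1 z2 z3 z4 : R[i]) :
  [/\ cev V1 (coords4 z1 z2 z3 z4) = z1, cev V2 (coords4 z1 z2 z3 z4) = z2 &
      cev V3 (coords4 z1 z2 z3 z4) = z3].
Proof.
rewrite /cev /V1 /V2 /V3 /= !mevalXU /coords4 /=.
by split; [case: z1|case: z2|case: z3].
Qed.

Definition area (x y : R[i]) : R := complex.Im (x * conjc y).
Section ABC.
Variables a b c : R[i].
Definition SS := a * b + b * c + c * a.
Definition k1 := b * c / SS.
Definition k2 := c * a / SS.
Definition k3 := a * b / SS.
Definition P123c (P1 P2 P3 : R[i]) := k1 * P1 + k2 * P2 + k3 * P3.
Definition P123p : cp := cadd (cadd (cscal k1 V1) (cscal k2 V2)) (cscal k3 V3).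
Definition Dp := carea (csub V1 V3) (csub V2 V3).
Definition G1p := carea (csub P123p V3) (csub V2 V3).
Definition G2p := carea (csub V1 V3) (csub P123p V3).
Definition G3p := carea (csub V1 P123p) (csub V2 P123p).
Definition pp := Dp * G1p * G2p * G3p.

Lemma P123_ev z1 z2 z3 z4 : cev P123p (coords4 z1 z2 z3 z4) = P123c z1 z2 z3.
Proof. by case: (cev_V z1 z2 z3 z4) => h1 h2 h3; rewrite /P123p !cev_add !cev_scal h1 h2 h3. Qed.

Lemma Dp_ev z1 z2 z3 z4 : Dp.@[coords4 z1 z2 z3 z4] = area (z1 - z3) (z2 - z3).
Proof. by case: (cev_V z1 z2 z3 z4) => h1 h2 h3; rewrite /Dp carea_ev !cev_sub h1 h2 h3. Qed.
Lemma G1p_ev z1 z2 z3 z4 : G1p.@[coords4 z1 z2 z3 z4] =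
  area (P123c z1 z2 z3 - z3) (z2 - z3).
Proof.
by case: (cev_V z1 z2 z3 z4) => h1 h2 h3; rewrite /G1p carea_ev !cev_sub P123_ev h2 h3.
Qed.
Lemma G2p_ev z1 z2 z3 z4 : G2p.@[coords4 z1 z2 z3 z4] =
  area (z1 - z3) (P123c z1 z2 z3 - z3).
Proof.
by case: (cev_V z1 z2 z3 z4) => h1 h2 h3; rewrite /G2p carea_ev !cev_sub P123_ev h1 h3.
Qed.
Lemma G3p_ev z1 z2 z3 z4 : G3p.@[coords4 z1 z2 z3 z4] =
  area (z1 - P123c z1 z2 z3) (z2 - P123c z1 z2 z3).
Proof.
by case: (cev_V z1 z2 z3 z4) => h1 h2 h3; rewrite /G3p carea_ev !cev_sub P123_ev h1 h2.
Qed.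

Hypothesis a0 : a != 0.
Hypothesis b0 : b != 0.
Hypothesis c0 : c != 0.
Hypothesis S0 : SS != 0.

Lemma k1_neq0 : k1 != 0. Proof. by rewrite /k1 !mulf_neq0 ?invr_neq0. Qed.
Lemma k2_neq0 : k2 != 0. Proof. by rewrite /k2 !mulf_neq0 ?invr_neq0. Qed.
Lemma k3_neq0 : k3 != 0. Proof. by rewrite /k3 !mulf_neq0 ?invr_neq0. Qed.

Lemma pp_neq0 : pp != 0.
Proof.
rewrite /pp !mulf_neq0 //.
- apply/eqP => /(congr1 (meval (coords4 (Complex 0 1) 1 0 0))).
  rewrite Dp_ev meval0 /area /= => /eqP; rewrite !(mul0r, mulr0, subr0, addr0, mul1r, oppr0) /=.
  by rewrite add0r oner_eq0.
- apply/eqP => h.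
  have h0 := congr1 (meval (coords4 0 1 0 0)) h.
  have h1 := congr1 (meval (coords4 (Complex 0 1 * conjc k1) 1 0 0)) h.
  move: h0 h1; rewrite !G1p_ev !meval0 /area /P123c.
  have := k1_neq0; move: k1 k2 k3 => [x1 y1] [x2 y2] [x3 y3] nk /= e0 e1.
  apply: (negP nk); apply/eqP; apply: sqn_eq0; rewrite /sqn /=; move: e0 e1; nra.
- apply/eqP => h.
  have h0 := congr1 (meval (coords4 1 0 0 0)) h.
  have h1 := congr1 (meval (coords4 1 (Complex 0 1 * conjc k2) 0 0)) h.
  move: h0 h1; rewrite !G2p_ev !meval0 /area /P123c.
  have := k2_neq0; move: k1 k2 k3 => [x1 y1] [x2 y2] [x3 y3] nk /= e0 e1.
  apply: (negP nk); apply/eqP; apply: sqn_eq0; rewrite /sqn /=; move: e0 e1; nra.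
apply/eqP => h.
have h0 := congr1 (meval (coords4 0 1 0 0)) h.
have h1 := congr1 (meval (coords4 0 1 (Complex 0 1 * conjc k3) 0)) h.
move: h0 h1; rewrite !G3p_ev !meval0 /area /P123c.
have := k3_neq0; move: k1 k2 k3 => [x1 y1] [x2 y2] [x3 y3] nk /= e0 e1.
apply: (negP nk); apply/eqP; apply: sqn_eq0; rewrite /sqn /=; move: e0 e1; nra.
Qed.

End ABC.

End Poly.


Arguments area {R}.
Arguments mden {R}.
Arguments mdet {R}.
Arguments mob_finE {R}.
Arguments sqn_eq0 {R}.
Section Mob.
Variable R : rcfType.
Implicit Types x y z w : R[i].

Lemma bary (P1 P2 P3 Z : R[i]) : (area (P1 - P3) (P2 - P3))%:C * Z =
  (area (Z - P3) (P2 - P3))%:C * P1 + (area (P1 - P3) (Z - P3))%:C * P2 +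
  (area (P1 - Z) (P2 - Z))%:C * P3.
Proof. rewrite /area; case: P1 => ? ?; case: P2 => ? ?; case: P3 => ? ?; case: Z => ? ?.
apply: ceqP; rewrite /=; ring. Qed.

Lemma bsum (P1 P2 P3 Z : R[i]) :
  area (Z - P3) (P2 - P3) + area (P1 - P3) (Z - P3) + area (P1 - Z) (P2 - Z) =
  area (P1 - P3) (P2 - P3).
Proof. rewrite /area; case: P1 => ? ?; case: P2 => ? ?; case: P3 => ? ?; case: Z => ? ? /=; ring. Qed.

Lemma area_self x : area x x = 0.
Proof. exact: Im_self. Qed.
Lemma area0l x : area 0 x = 0.
Proof. by rewrite /area mul0r. Qed.

Lemma mob_fin_id z : mob_fin (Mobius 1 0 0 1) z = z.
Proof.
by rewrite /mob_fin /mob_app /= mul0r add0r oner_eq0 /= mul1r addr0 divr1.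
Qed.

Lemma mob_finW (N : mobius R) z w : mden N z != 0 ->
  mob_a N * z + mob_b N = w * mden N z -> mob_fin N z = w.
Proof. by move=> nz e; rewrite mob_finE // e mulfK. Qed.

Lemma uniq4' (T : eqType) (x1 x2 x3 x4 : T) :
  x1 != x2 -> x1 != x3 -> x1 != x4 -> x2 != x3 -> x2 != x4 -> x3 != x4 ->
  uniq [:: x1; x2; x3; x4].
Proof. by move=> h1 h2 h3 h4 h5 h6; rewrite /= !inE !negb_or h1 h2 h3 h4 h5 h6. Qed.

Definition Tm (z23 z13 z12 : R[i]) : mobius R :=
  Mobius (z13 - z12) (- z23 * (z13 - z12)) (z13 - z23) (- z12 * (z13 - z23)).

Definition Nm (Q23 Q13 Q12 q23 q13 q12 : R[i]) : mobius R :=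
  let T := Tm Q23 Q13 Q12 in let S := Tm q23 q13 q12 in
  Mobius (mob_d S * mob_a T - mob_b S * mob_c T) (mob_d S * mob_b T - mob_b S * mob_d T)
         (mob_a S * mob_c T - mob_c S * mob_a T) (mob_a S * mob_d T - mob_c S * mob_b T).

Section N.
Variables Q23 Q13 Q12 q23 q13 q12 : R[i].
Hypothesis D1 : Q23 != Q13.
Hypothesis D2 : Q23 != Q12.
Hypothesis D3 : Q13 != Q12.
Hypothesis E1 : q23 != q13.
Hypothesis E2 : q23 != q12.
Hypothesis E3 : q13 != q12.
Local Notation N := (Nm Q23 Q13 Q12 q23 q13 q12).

Lemma sub_neq x y : x != y -> x - y != 0. Proof. by rewrite subr_eq0. Qed.

Lemma N_ok : mobius_ok N.
Proof using D1 D2 D3 E1 E2 E3.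
rewrite /mobius_ok.
have -> : mob_a N * mob_d N - mob_b N * mob_c N =
  ((q13 - q12) * (q13 - q23) * (q23 - q12)) * ((Q13 - Q12) * (Q13 - Q23) * (Q23 - Q12)).
  by rewrite /Nm /Tm /=; ring.
by rewrite !mulf_neq0 // sub_neq // eq_sym.
Qed.

Lemma N_Q23 : mden N Q23 != 0 /\ mob_fin N Q23 = q23.
Proof using D1 D2 D3 E1 E2 E3.
have e : mden N Q23 = (q13 - q12) * ((Q13 - Q23) * (Q23 - Q12)) by rewrite /mden /Nm /Tm /=; ring.
have nz : mden N Q23 != 0 by rewrite e !mulf_neq0 // sub_neq // eq_sym.
split=> //; apply: mob_finW => //; rewrite e /Nm /Tm /=; ring.
Qed.

Lemma N_Q12 : mden N Q12 != 0 /\ mob_fin N Q12 = q12.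
Proof using D1 D2 D3 E1 E2 E3.
have e : mden N Q12 = - (q13 - q23) * ((Q13 - Q12) * (Q12 - Q23)) by rewrite /mden /Nm /Tm /=; ring.
have nz : mden N Q12 != 0 by rewrite e !mulf_neq0 ?oppr_eq0 // sub_neq // eq_sym.
split=> //; apply: mob_finW => //; rewrite e /Nm /Tm /=; ring.
Qed.

Lemma N_Q13 : mden N Q13 != 0 /\ mob_fin N Q13 = q13.
Proof using D1 D2 D3 E1 E2 E3.
have e : mden N Q13 = (q23 - q12) * ((Q13 - Q12) * (Q13 - Q23)) by rewrite /mden /Nm /Tm /=; ring.
have nz : mden N Q13 != 0 by rewrite e !mulf_neq0 // sub_neq // eq_sym.
split=> //; apply: mob_finW => //; rewrite e /Nm /Tm /=; ring.
Qed.

Lemma N_Q Q : Q != Q12 ->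
  - (q12 * (q13 - q23)) * ((Q13 - Q12) * (Q - Q23)) +
    q23 * (q13 - q12) * ((Q13 - Q23) * (Q - Q12)) = 0 ->
  mden N Q != 0 /\ mob_fin N Q = 0.
Proof using D1 D2 D3 E1 E2 E3.
move=> nQ hnum.
have enum : mob_a N * Q + mob_b N = - (q12 * (q13 - q23)) * ((Q13 - Q12) * (Q - Q23)) +
    q23 * (q13 - q12) * ((Q13 - Q23) * (Q - Q12)) by rewrite /Nm /Tm /=; ring.
have key : (q13 - q23) * (mob_a N * Q + mob_b N) + (- q12 * (q13 - q23)) * mden N Q =
  ((q13 - q12) * (- q12 * (q13 - q23)) - (- q23 * (q13 - q12)) * (q13 - q23)) *
  ((Q13 - Q23) * (Q - Q12)) by rewrite /mden /Nm /Tm /=; ring.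
have nz : mden N Q != 0.
  apply/eqP => h0; move: key; rewrite enum hnum h0 !mulr0 addr0 => /esym/eqP.
  have -> : (q13 - q12) * (- q12 * (q13 - q23)) - (- q23 * (q13 - q12)) * (q13 - q23) =
    (q13 - q12) * (q13 - q23) * (q23 - q12) by ring.
  by apply/negP; rewrite !mulf_neq0 // sub_neq // eq_sym.
by split=> //; apply: mob_finW => //; rewrite enum hnum mul0r.
Qed.

End N.

Definition poleN (N : mobius R) : sphere R :=
  if mob_c N == 0 then None else Some (- mob_d N / mob_c N).

Lemma poleN_None (N : mobius R) : mob_app N (poleN N) = None.
Proof.
rewrite /poleN; have [c0|nc] := eqVneq (mob_c N) 0; first by rewrite /= c0 eqxx.
rewrite /=.
have -> : mob_c N * (- mob_d N / mob_c N) + mob_d N = 0 by field.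
by rewrite eqxx.
Qed.

Lemma poleN_neq (N : mobius R) z : mden N z != 0 -> poleN N != Some z.
Proof.
move=> hz; rewrite /poleN; have [c0|nc] := eqVneq (mob_c N) 0; first by [].
apply/negP => /eqP [e].
move: hz; rewrite /mden -e.
have -> : mob_c N * (- mob_d N / mob_c N) + mob_d N = 0 by field.
by rewrite eqxx.
Qed.

Lemma area0r x : area x 0 = 0.
Proof. by rewrite /area conjc0' mulr0. Qed.

End Mob.


Arguments area {R}.
Arguments pp {R}.
Arguments P123c {R}.
Arguments k1 {R}.
Arguments k2 {R}.
Arguments k3 {R}.
Arguments SS {R}.
Arguments Nm {R}.
Arguments poleN {R}.
Section P2.
Variable R : rcfType.

Lemma numQ (q12 q13 q23 Q Q12 Q13 Q23 P1 P2 P3 P123 a c S G1 G2 G3 D : R[i]) :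
  q12 = G1 * G2 * (P1 - P2) -> q23 = G2 * G3 * (P2 - P3) ->
  q13 - q12 = G1 * D * (P123 - P1) -> q13 - q23 = G3 * D * (P3 - P123) ->
  a * (Q13 - Q12) = S * (P123 - P1) -> c * (Q13 - Q23) = S * (P3 - P123) ->
  Q - Q23 = - a * (P2 - P3) -> Q - Q12 = - c * (P1 - P2) ->
  - (q12 * (q13 - q23)) * ((Q13 - Q12) * (Q - Q23)) +
    q23 * (q13 - q12) * ((Q13 - Q23) * (Q - Q12)) = 0.
Proof.
move=> h1 h2 h3 h4 h5 h6 h7 h8.
rewrite h3 h4 h7 h8.
transitivity (q12 * G3 * D * (P3 - P123) * (P2 - P3) * (a * (Q13 - Q12)) -
              q23 * G1 * D * (P123 - P1) * (P1 - P2) * (c * (Q13 - Q23))); first by ring.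
rewrite h5 h6 h1 h2; ring.
Qed.

Lemma part2 :
  (forall a b c : R[i], a != 0 -> b != 0 -> c != 0 ->
     a * b + b * c + c * a != 0 ->
     let a1 := - (a / (a * b + b * c + c * a)) in
     let b2 := - (b / (a * b + b * c + c * a)) in
     let c3 := - (c / (a * b + b * c + c * a)) in
     let eqs P1 P2 P3 Q (Q12 Q23 Q13 P123 : R[i]) :=
       [/\ Q12 - Q = c * (P1 - P2), Q23 - Q = a * (P2 - P3),
           Q13 - Q = b * (P3 - P1) /\ P123 - P3 = c3 * (Q13 - Q23),
           P123 - P1 = a1 * (Q12 - Q13) & P123 - P2 = b2 * (Q23 - Q12)] in
     exists p : {mpoly R[8]}, p != 0 /\
     forall P1 P2 P3 Q : R[i], p.@[coords4 P1 P2 P3 Q] != 0 ->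
       exists Q12 Q23 Q13 P123 : R[i],
         [/\ eqs P1 P2 P3 Q Q12 Q23 Q13 P123,
             (forall Q12' Q23' Q13' P123' : R[i],
                 eqs P1 P2 P3 Q Q12' Q23' Q13' P123' ->
                 [/\ Q12' = Q12, Q23' = Q23, Q13' = Q13 & P123' = P123]) &
             exists Ps Qs : sphere R,
               reciprocal P1 P2 P3 P123 Ps Q23 Q13 Q12 Q Qs]).
Proof.
move=> a b c a0 b0 c0 S0 a1 b2 c3 eqs.
exists (pp a b c); split; first exact: pp_neq0.
move=> P1 P2 P3 Q; rewrite /pp !mevalM Dp_ev G1p_ev G2p_ev G3p_ev.
set P123 := P123c a b c P1 P2 P3.
set D := area (P1 - P3) (P2 - P3).
set g1 := area (P123 - P3) (P2 - P3).
set g2 := area (P1 - P3) (P123 - P3).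
set g3 := area (P1 - P123) (P2 - P123).
move=> hp.
have nD : D != 0 by apply: contra hp => /eqP ->; rewrite !mul0r eqxx.
have ng1 : g1 != 0 by apply: contra hp => /eqP ->; rewrite !(mul0r, mulr0) eqxx.
have ng2 : g2 != 0 by apply: contra hp => /eqP ->; rewrite !(mul0r, mulr0) eqxx.
have ng3 : g3 != 0 by apply: contra hp => /eqP ->; rewrite !(mul0r, mulr0) eqxx.
have n12 : P1 != P2 by apply: contra nD => /eqP e; rewrite /D e area_self.
have n13 : P1 != P3 by apply: contra nD => /eqP e; rewrite /D e subrr area0l.
have n23 : P2 != P3 by apply: contra nD => /eqP e; rewrite /D e subrr area0r.
have m1 : P1 != P123 by apply: contra ng2 => /eqP e; rewrite /g2 -e area_self.
have m2 : P2 != P123 by apply: contra ng1 => /eqP e; rewrite /g1 -e area_self.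
have m3 : P3 != P123 by apply: contra ng1 => /eqP e; rewrite /g1 -e subrr area0l.
set Q12 := Q + c * (P1 - P2).
set Q23 := Q + a * (P2 - P3).
set Q13 := Q + b * (P3 - P1).
have hQ12 : Q12 - Q = c * (P1 - P2) by rewrite /Q12; ring.
have hQ23 : Q23 - Q = a * (P2 - P3) by rewrite /Q23; ring.
have hQ13 : Q13 - Q = b * (P3 - P1) by rewrite /Q13; ring.
have hP3 : P123 - P3 = c3 * (Q13 - Q23).
  by rewrite /P123 /P123c /k1 /k2 /k3 /SS /c3 /Q13 /Q23; field.
have hP1 : P123 - P1 = a1 * (Q12 - Q13).
  by rewrite /P123 /P123c /k1 /k2 /k3 /SS /a1 /Q12 /Q13; field.
have hP2 : P123 - P2 = b2 * (Q23 - Q12).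
  by rewrite /P123 /P123c /k1 /k2 /k3 /SS /b2 /Q23 /Q12; field.
have hA : a * (Q13 - Q12) = (a * b + b * c + c * a) * (P123 - P1).
  by rewrite /P123 /P123c /k1 /k2 /k3 /SS /Q13 /Q12; field.
have hC : c * (Q13 - Q23) = (a * b + b * c + c * a) * (P3 - P123).
  by rewrite /P123 /P123c /k1 /k2 /k3 /SS /Q13 /Q23; field.
exists Q12, Q23, Q13, P123; split.
- by rewrite /eqs; split.
- move=> Q12' Q23' Q13' P123' [h1 h2 [h3 h4] h5 h6].
  have e12 : Q12' = Q12 by rewrite /Q12 -h1; ring.
  have e23 : Q23' = Q23 by rewrite /Q23 -h2; ring.
  have e13 : Q13' = Q13 by rewrite /Q13 -h3; ring.
  split=> //.
  have -> : P123' = P1 + a1 * (Q12' - Q13') by rewrite -h5; ring.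
  by rewrite e12 e13 -hP1; ring.
have nd : forall x y : R[i], x != y -> y != x by move=> x y; rewrite eq_sym.
have sub0 : forall x y : R[i], x - y != 0 -> x != y by move=> x y; rewrite subr_eq0.
have r0 : forall r : R, r != 0 -> r%:C != 0 :> R[i] by move=> r; rewrite rC0.
have q1 : Q23 != Q by apply: sub0; rewrite hQ23 mulf_neq0 // subr_eq0.
have q2 : Q13 != Q by apply: sub0; rewrite hQ13 mulf_neq0 // subr_eq0 eq_sym.
have q3 : Q12 != Q by apply: sub0; rewrite hQ12 mulf_neq0 // subr_eq0.
have q4 : Q23 != Q13.
  apply: contra m3 => /eqP e; apply/eqP; apply/esym/eqP; rewrite -subr_eq0 hP3 e subrr mulr0.
  by [].
have q5 : Q23 != Q12.
  apply: contra m2 => /eqP e; apply/eqP; apply/esym/eqP; rewrite -subr_eq0 hP2 e subrr mulr0.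
  by [].
have q6 : Q13 != Q12.
  apply: contra m1 => /eqP e; apply/eqP; apply/esym/eqP; rewrite -subr_eq0 hP1 e subrr mulr0.
  by [].
set q12 := (g1 * g2)%:C * (P1 - P2).
set q23 := (g2 * g3)%:C * (P2 - P3).
set q13 := (g3 * g1)%:C * (P3 - P1).
have hb : D%:C * P123 = g1%:C * P1 + g2%:C * P2 + g3%:C * P3 by exact: bary.
have hs : D%:C = g1%:C + g2%:C + g3%:C :> R[i].
  by rewrite -!rCD; congr (_%:C); exact: (esym (bsum _ P1 P2 P3 P123)).
have f1 : q13 - q12 = (g1 * D)%:C * (P123 - P1).
  transitivity (g1%:C * (D%:C * P123 - D%:C * P1)); last by rewrite rCM; ring.
  by rewrite hb hs /q13 /q12 !rCM; ring.
have f2 : q12 - q23 = (g2 * D)%:C * (P123 - P2).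
  transitivity (g2%:C * (D%:C * P123 - D%:C * P2)); last by rewrite rCM; ring.
  by rewrite hb hs /q23 /q12 !rCM; ring.
have f3 : q23 - q13 = (g3 * D)%:C * (P123 - P3).
  transitivity (g3%:C * (D%:C * P123 - D%:C * P3)); last by rewrite rCM; ring.
  by rewrite hb hs /q23 /q13 !rCM; ring.
have E1 : q23 != q13.
  by apply: sub0; rewrite f3 mulf_neq0 ?r0 ?mulf_neq0 // subr_eq0 eq_sym.
have E2 : q23 != q12.
  by apply: nd; apply: sub0; rewrite f2 mulf_neq0 ?r0 ?mulf_neq0 // subr_eq0 eq_sym.
have E3 : q13 != q12.
  by apply: sub0; rewrite f1 mulf_neq0 ?r0 ?mulf_neq0 // subr_eq0 eq_sym.
have hnum : - (q12 * (q13 - q23)) * ((Q13 - Q12) * (Q - Q23)) +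
    q23 * (q13 - q12) * ((Q13 - Q23) * (Q - Q12)) = 0.
  apply: (numQ _ _ _ _ _ _ _ _ _ _ _ a c (a * b + b * c + c * a) g1%:C g2%:C g3%:C D%:C).
  - by rewrite /q12 rCM.
  - by rewrite /q23 rCM.
  - by rewrite f1 rCM.
  - have -> : q13 - q23 = - (q23 - q13) by ring.
    by rewrite f3 rCM; ring.
  - exact: hA.
  - exact: hC.
  - by rewrite /Q23; ring.
  - by rewrite /Q12; ring.
have [dQ23 gQ23] := N_Q23 _ _ _ _ _ _ _ q4 q5 q6 E1 E2 E3.
have [dQ12 gQ12] := N_Q12 _ _ _ _ _ _ _ q4 q5 q6 E1 E2 E3.
have [dQ13 gQ13] := N_Q13 _ _ _ _ _ _ _ q4 q5 q6 E1 E2 E3.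
have [dQ gQ] := N_Q _ _ _ _ _ _ _ q4 q5 q6 E1 E2 E3 Q (nd _ _ q3) hnum.
have okN := N_ok _ _ _ _ _ _ _ q4 q5 q6 E1 E2 E3.
set N := Nm Q23 Q13 Q12 q23 q13 q12 in dQ23 gQ23 dQ12 gQ12 dQ13 gQ13 dQ gQ okN.
exists None, (poleN N); split; [|split].
- split=> //; apply: uniq4' => //; exact: nd.
- split; [|exact: poleN_neq|exact: poleN_neq|by rewrite !poleN_neq].
  by apply: uniq4'; rewrite // nd.
exists (Mobius 1 0 0 1), N, 1; split.
- split=> //; rewrite /mobius_ok /= mulr1 mulr0 subr0; exact: oner_neq0.
- by rewrite /= eqxx.
- exact: poleN_None.
- exact: normr1.
rewrite /= !mob_fin_id gQ23 gQ12 gQ13 gQ !mul1r.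
split.
- have -> : 0 - q12 = (- (g1 * g2))%:C * (P1 - P2) by rewrite rCN /q12; ring.
  exact: par_real.
- have -> : 0 - q23 = (- (g2 * g3))%:C * (P2 - P3) by rewrite rCN /q23; ring.
  exact: par_real.
- split.
    have -> : 0 - q13 = (- (g3 * g1))%:C * (P3 - P1) by rewrite rCN /q13; ring.
    exact: par_real.
  have -> : q13 - q12 = (- (g1 * D))%:C * (P1 - P123) by rewrite f1 rCN; ring.
  exact: par_real.
- have -> : q12 - q23 = (- (g2 * D))%:C * (P2 - P123) by rewrite f2 rCN; ring.
  exact: par_real.
have -> : q23 - q13 = (- (g3 * D))%:C * (P3 - P123) by rewrite f3 rCN; ring.
exact: par_real.
Qed.

End P2.

Local Close Scope complex_scope.

Theorem theorem3 (R : rcfType) :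
  (* (i) *)
  (forall (P1 P2 P3 P123 Q23 Q13 Q12 Q : R[i]) (Ps Qs : sphere R),
     reciprocal P1 P2 P3 P123 Ps Q23 Q13 Q12 Q Qs ->
     ~ concyclic [:: Some P1; Some P2; Some P3; Some P123; Ps] ->
     forall a b c a1 b2 c3 : R[i],
       Q12 - Q = c * (P1 - P2) ->
       Q23 - Q = a * (P2 - P3) ->
       Q13 - Q = b * (P3 - P1) ->
       P123 - P3 = c3 * (Q13 - Q23) ->
       P123 - P1 = a1 * (Q12 - Q13) ->
       P123 - P2 = b2 * (Q23 - Q12) ->
       [/\ a1 = - (a / (a * b + b * c + c * a)),
           b2 = - (b / (a * b + b * c + c * a)) &
           c3 = - (c / (a * b + b * c + c * a))]) /\
  (* (ii) *)
  (forall a b c : R[i], a != 0 -> b != 0 -> c != 0 ->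
     a * b + b * c + c * a != 0 ->
     let a1 := - (a / (a * b + b * c + c * a)) in
     let b2 := - (b / (a * b + b * c + c * a)) in
     let c3 := - (c / (a * b + b * c + c * a)) in
     let eqs P1 P2 P3 Q (Q12 Q23 Q13 P123 : R[i]) :=
       [/\ Q12 - Q = c * (P1 - P2), Q23 - Q = a * (P2 - P3),
           Q13 - Q = b * (P3 - P1) /\ P123 - P3 = c3 * (Q13 - Q23),
           P123 - P1 = a1 * (Q12 - Q13) & P123 - P2 = b2 * (Q23 - Q12)] in
     exists p : {mpoly R[8]}, p != 0 /\
     forall P1 P2 P3 Q : R[i], p.@[coords4 P1 P2 P3 Q] != 0 ->
       exists Q12 Q23 Q13 P123 : R[i],
         [/\ eqs P1 P2 P3 Q Q12 Q23 Q13 P123,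
             (forall Q12' Q23' Q13' P123' : R[i],
                 eqs P1 P2 P3 Q Q12' Q23' Q13' P123' ->
                 [/\ Q12' = Q12, Q23' = Q23, Q13' = Q13 & P123' = P123]) &
             exists Ps Qs : sphere R,
               reciprocal P1 P2 P3 P123 Ps Q23 Q13 Q12 Q Qs]).
Proof.
split; [exact: part1 | exact: part2].
Qed.
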